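(* Let $\Sigma$ be a finite alphabet. If $L \subseteq \Sigma^*$ has growth $g(n)$, then $F_L(n) \in \mathcal{O}(\log g(n) + \log n)$.
   Context: The growth of $L$ is $g(n)=|\{x\in L : |x|\le n\}|$. $\log x=\lfloor\log_2 x\rfloor$. Fixed-size sliding window model: fix $a\in\Sigma$; $\mathrm{last}_n(a_1\cdots a_m)=a_{m-n+1}\cdots a_m$ if $n\le m$, else $a^{n-m}a_1\cdots a_m$. A fixed-size sliding window algorithm for $L$ is a sequence $(\mathcal{A}_n)_{n\ge0}$ of deterministic (possibly infinite-state) automata with injective encodings of their states into bit strings, $\mathcal{A}_n$ accepting $\{w:\mathrm{last}_n(w)\in L\}$; its space complexity at $n$ is the maximal encoding length of a state of $\mathcal{A}_n$. $F_L(n)$ is the minimal space complexity at $n$ over all such algorithms. *)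

(* Defs.v *)
From mathcomp Require Import all_boot.
Set Implicit Arguments. Unset Strict Implicit. Unset Printing Implicit Defensive.

(* log x = floor(log2 x); we use trunc_log 2 (with trunc_log 2 0 = 0). *)
Definition log2 (x : nat) : nat := trunc_log 2 x.

Definition growth (Sigma : finType) (L : pred (seq Sigma)) (n : nat) : nat :=
  \sum_(k < n.+1) #|[set t : k.-tuple Sigma | L (tval t)]|.

Definition last_n (Sigma : Type) (a : Sigma) (n : nat) (w : seq Sigma) : seq Sigma :=
  if n <= size w then drop (size w - n) w else nseq (n - size w) a ++ w.

(* Deterministic, possibly infinite-state automaton together with an
   injective encoding of its states into bit strings. *)
Record enc_dfa (Sigma : Type) := EncDFA {
  st : Type;
  init : st;
  delta : st -> Sigma -> st;
  final : st -> bool;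
  enc : st -> seq bool;
  enc_inj : injective enc
}.
Arguments st {Sigma} A : rename.
Arguments init {Sigma} A : rename.
Arguments delta {Sigma} A _ _ : rename.
Arguments final {Sigma} A _ : rename.
Arguments enc {Sigma} A _ : rename.

Definition dfa_accepts (Sigma : Type) (A : enc_dfa Sigma) (w : seq Sigma) : bool :=
  final A (foldl (delta A) (init A) w).

Definition space_le (Sigma : Type) (A : enc_dfa Sigma) (s : nat) : Prop :=
  forall q : st A, size (enc A q) <= s.

Definition sw_automaton (Sigma : Type) (a : Sigma) (L : pred (seq Sigma))
    (n : nat) (A : enc_dfa Sigma) : Prop :=
  forall w : seq Sigma, dfa_accepts A w = L (last_n a n w).

(* F_L(n) <= s, i.e. (F_L(n) being a minimum over natural numbers) some
   sliding window automaton A_n for L has space complexity at most s. *)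
Definition F_le (Sigma : Type) (a : Sigma) (L : pred (seq Sigma)) (n s : nat) : Prop :=
  exists A : enc_dfa Sigma, sw_automaton a L n A /\ space_le A s.

(* Main.v *)
Require Import Defs.
From mathcomp Require Import all_boot.
From mathcomp Require Import zify.

Set Implicit Arguments. Unset Strict Implicit. Unset Printing Implicit Defensive.

Fixpoint bits (k B : nat) : seq bool :=
  if B is B'.+1 then odd k :: bits k./2 B' else [::].

Lemma size_bits k B : size (bits k B) = B.
Proof. by elim: B k => //= B IH k; rewrite IH. Qed.

Lemma bits_inj B k k' : k < 2 ^ B -> k' < 2 ^ B -> bits k B = bits k' B -> k = k'.
Proof.
elim: B k k' => [|B IH] k k' /=.
  by rewrite expn0; case: k => //; case: k'.
move=> hk hk' [ho hb].
have e1 := odd_double_half k; have e2 := odd_double_half k'.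
have b1 := leq_b1 (odd k).
rewrite -!muln2 in e1 e2.
have h1 : k./2 < 2 ^ B by rewrite expnS in hk; lia.
have h2 : k'./2 < 2 ^ B by rewrite expnS in hk'; lia.
have hh := IH _ _ h1 h2 hb; rewrite ho in e1.
by rewrite -e1 hh e2.
Qed.

Section Main.
Variables (Sigma : finType) (a : Sigma) (L : pred (seq Sigma)) (n : nat).

Definition T := [set t : n.-tuple Sigma | L t].
Definition Pp (s : seq Sigma) : bool := [exists t in T, s == take (size s) t].
Definition P (s : seq Sigma) : bool := (s == [::]) || Pp s.

Fixpoint lsuf (x : seq Sigma) : seq Sigma :=
  if P x then x else if x is _ :: x' then lsuf x' else [::].

Lemma P_nil : P [::].
Proof. by []. Qed.

Lemma P_rcons y c : P (rcons y c) -> P y.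
Proof.
rewrite /P; case/orP; first by case: y.
case/exists_inP => t tT /eqP e; apply/orP; right; apply/exists_inP; exists t => //.
apply/eqP.
have -> : take (size y) t = take (size y) (rcons y c) by rewrite e size_rcons take_takel.
by rewrite -cats1 take_size_cat.
Qed.

Lemma P_size s : P s -> size s <= n.
Proof.
case/orP; first by move/eqP->.
case/exists_inP => t _ /eqP e; rewrite e size_take_min size_tuple; exact: geq_minr.
Qed.

Lemma lsuf_spec x : exists k, [/\ lsuf x = drop k x, P (drop k x) &
  forall j, j < k -> ~~ P (drop j x)].
Proof.
elim: x => [|b x [k [e1 e2 e3]]]; first by exists 0.
case Px: (P (b :: x)).
  by exists 0; rewrite /= Px; split => //; rewrite drop0.
exists k.+1; rewrite /= Px; split => //.
by case => [|j] /=; [rewrite Px | exact: e3].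
Qed.

Lemma lsuf_uniq x k : P (drop k x) -> (forall j, j < k -> ~~ P (drop j x)) ->
  lsuf x = drop k x.
Proof.
elim: x k => [|b x IH] k /=.
  by case: k.
case Px: (P (b :: x)).
  case: k => [|k] // _ h; by move: (h 0 isT); rewrite drop0 Px.
case: k => [|k]; first by rewrite drop0 Px.
move=> /= hP h; apply: IH => // j hj; exact: (h j.+1).
Qed.

Lemma lsuf_P x : P x -> lsuf x = x.
Proof. by case: x => [|b x] //= ->. Qed.

Lemma P_lsuf x : P (lsuf x).
Proof. by have [k [-> ? _]] := lsuf_spec x. Qed.

Lemma lsuf_rcons x c : lsuf (rcons x c) = lsuf (rcons (lsuf x) c).
Proof.
have [k [e1 e2 e3]] := lsuf_spec x.
have kx : k <= size x.
  rewrite leqNgt; apply/negP => h; move: (e3 _ h); by rewrite drop_size.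
have [m [f1 f2 f3]] := lsuf_spec (rcons (lsuf x) c).
rewrite f1 e1.
have dk : drop k (rcons x c) = rcons (drop k x) c by rewrite drop_rcons.
rewrite -dk drop_drop; apply: lsuf_uniq.
  by rewrite -drop_drop dk -e1.
move=> j hj.
case: (ltnP j k) => hjk.
  rewrite drop_rcons; last by lia.
  by apply/negP => /P_rcons; apply/negP; exact: e3.
have -> : j = (j - k) + k by lia.
rewrite -drop_drop dk -e1; apply: f3; lia.
Qed.

Lemma lsuf_cat x w : lsuf (x ++ w) = lsuf (lsuf x ++ w).
Proof.
elim: w x => [|c w IH] x.
  by rewrite !cats0 (lsuf_P (P_lsuf x)).
by rewrite -!cat_rcons IH lsuf_rcons -IH.
Qed.

Lemma lsuf_drop z m : m <= size z - n -> lsuf (drop m z) = lsuf z.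
Proof.
move=> hm.
have [k [e1 e2 e3]] := lsuf_spec z.
have := P_size e2; rewrite size_drop => hs.
rewrite e1 (@lsuf_uniq _ (k - m)).
- by rewrite drop_drop; congr drop; lia.
- by rewrite drop_drop subnK //; lia.
move=> j hj; rewrite drop_drop; apply: e3; lia.
Qed.

Definition finalf (s : seq Sigma) : bool := (size s == n) && L s.

Lemma final_lsuf y : size y = n -> finalf (lsuf y) = L y.
Proof.
move=> sy.
case Ly: (L y).
  have Py : P y.
    apply/orP; right; apply/exists_inP.
    have sy' : size y == n by apply/eqP.
    exists (Tuple sy'); first by rewrite inE.
    by apply/eqP; rewrite /= sy take_oversize // sy.
  by rewrite (lsuf_P Py) /finalf sy eqxx.
have [k [e1 _ _]] := lsuf_spec y.
rewrite e1 /finalf size_drop.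
case: (y =P [::]) => [ey|ny]; first by move: Ly; rewrite ey; case: k {e1} => [|k] /= ->; rewrite andbF.
have k0 : (size y - k == n) -> k = 0.
  move/eqP; case: y ny sy {e1 Ly} => //= b y _ sy; lia.
by case: eqP => // /eqP /k0 ->; rewrite drop0 Ly.
Qed.

Definition stt := {s : seq Sigma | P s}.
Definition init0 : stt := exist _ (lsuf (nseq n a)) (P_lsuf _).
Definition delta0 (q : stt) (c : Sigma) : stt :=
  exist _ (lsuf (rcons (sval q) c)) (P_lsuf _).

Lemma fold_val (q : stt) w : sval (foldl delta0 q w) = lsuf (sval q ++ w).
Proof.
elim: w q => [|c w IH] q /=.
  by rewrite cats0 lsuf_P //; case: q.
by rewrite IH /= -lsuf_cat -cat_rcons.
Qed.

Definition B1 := (log2 n).+1.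
Definition B2 := (log2 (growth L n)).+1.

Definition idx (s : seq Sigma) : nat :=
  if [pick t in T | s == take (size s) t] is Some t then index t (enum T) else 0.

Lemma card_T : #|T| <= growth L n.
Proof.
rewrite /growth big_ord_recr /=; exact: leq_addl.
Qed.

Lemma idx_lt s : idx s < 2 ^ B2.
Proof.
rewrite /idx; case: pickP => [t /andP [tT _]|_]; last by rewrite expn_gt0.
apply: (leq_trans _ (trunc_log_ltn _ _)) => //.
apply: (leq_trans _ card_T).
by rewrite cardE ltnW // index_mem mem_enum.
Qed.

Lemma size_lt s : P s -> size s < 2 ^ B1.
Proof.
move=> /P_size h; apply: (leq_ltn_trans h); exact: trunc_log_ltn.
Qed.

Definition enc0 (q : stt) : seq bool :=
  bits (size (sval q)) B1 ++ bits (idx (sval q)) B2.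

Lemma enc0_inj : injective enc0.
Proof.
move=> [s1 p1] [s2 p2]; rewrite /enc0 => /eqP.
rewrite eqseq_cat ?size_bits // => /andP [/eqP h1 /eqP h2].
have es := bits_inj (size_lt p1) (size_lt p2) h1.
have ei := bits_inj (idx_lt s1) (idx_lt s2) h2.
suff e : s1 = s2 by subst; congr exist; exact: bool_irrelevance.
move: ei; rewrite /idx.
have nilP s (ps : P s) (nn : forall t, (t \in T) && (s == take (size s) t) = false) : s = [::].
  move: ps; case/orP => [/eqP //|/exists_inP [t tT e]].
  by have := nn t; rewrite tT e.
case: pickP => [t1 /andP [t1T /eqP e1]|n1];
  case: pickP => [t2 /andP [t2T /eqP e2]|n2].
- move=> ei.
  have et : t1 = t2.
    have m1 : t1 \in enum T by rewrite mem_enum.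
    have m2 : t2 \in enum T by rewrite mem_enum.
    by rewrite -(nth_index t1 m1) ei nth_index.
  by rewrite e1 e2 es et.
- move=> _; have z2 := nilP _ p2 n2; rewrite z2 in es *.
  by apply/size0nil.
- move=> _; have z1 := nilP _ p1 n1; rewrite z1 in es *.
  by apply/esym/size0nil.
- by move=> _; rewrite (nilP _ p1 n1) (nilP _ p2 n2).
Qed.

End Main.

Lemma last_nE (Sigma : Type) (a : Sigma) n w :
  last_n a n w = drop (size (nseq n a ++ w) - n) (nseq n a ++ w).
Proof.
rewrite /last_n size_cat size_nseq drop_cat size_nseq.
case: ifP => h.
  have -> : n + size w - n < n = false by apply/negbTE; lia.
  by congr drop; lia.
have -> : n + size w - n < n = true by apply/idP; lia.
rewrite drop_nseq; congr (nseq _ _ ++ _); lia.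
Qed.

Theorem theorem4p3 (Sigma : finType) (a : Sigma) (L : pred (seq Sigma)) :
  exists c N : nat, forall n : nat, N <= n ->
    F_le a L n (c * (log2 (growth L n) + log2 n)).
Proof.
exists 3, 2 => n hn.
pose A := @EncDFA Sigma (stt L n) (init0 a L n) (@delta0 Sigma L n)
  (fun q => finalf L n (sval q)) (@enc0 Sigma L n) (@enc0_inj Sigma L n).
exists A; split.
- move=> w; rewrite /dfa_accepts /= fold_val /= -lsuf_cat last_nE.
  set z := nseq n a ++ w.
  have sz : n <= size z by rewrite /z size_cat size_nseq leq_addr.
  rewrite -(@lsuf_drop _ _ _ z (size z - n)) // final_lsuf // size_drop; lia.
- move=> q; change (size (enc0 q) <= 3 * (log2 (growth L n) + log2 n)); rewrite /enc0 size_cat !size_bits /B1 /B2.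
  have : 1 <= log2 n by apply: trunc_log_max.
  lia.
Qed.
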